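(* Consider the sparse sequence model and the data-dependent measure $\Delta^n$ described in the context, with $\lambda_n = O(n^{-(a+1)})$ as $n\to\infty$ for a constant $a>0$, and with $\alpha < 2T$. Then for any sequence $M_n > 1$ with $M_n\to\infty$, \[ \sup_{\theta^\star} \mathsf{E}_{\theta^\star} \Delta^n\bigl(\{\theta\in\mathbb{R}^n : |S_\theta| > M_n |S_{\theta^\star}|\}\bigr) \to 0, \quad n\to\infty. \]
   Context: Model: one observes $Y^n=(Y_1,\ldots,Y_n)^\top$ with $Y_i = \theta_i + Z_i$, $i=1,\ldots,n$, where $\theta\in\mathbb{R}^n$ is unknown and $Z_1,\ldots,Z_n$ are iid copies of a random variable $Z$ with fully known distribution, mean zero, and subgaussian in the sense that $\mathsf{E}\exp(tZ) \le \exp(\sigma^2 t^2/2)$ for all $t\in\mathbb{R}$, for a known constant $\sigma>0$. $T>0$ denotes the upper endpoint of the interval on which the moment generating function of $(Z/\sigma)^2$ exists, i.e. $\mathsf{E} e^{t (Z/\sigma)^2}$ is finite (bounded by a constant) for $t\in(0,T]$. $\mathsf{E}_{\theta^\star}$ denotes expectation when the true mean vector is $\theta^\star$. For $\theta\in\mathbb{R}^n$, $S_\theta=\{i:\theta_i\neq 0\}$ and $|S_\theta|$ is its cardinality. Data-dependent measure: fix constants $\alpha\in(0,1)$, $\gamma>0$ and a sequence $\lambda_n\in(0,1)$. Define $\Delta^n = \bigotimes_{i=1}^n \{\phi_i\, \mathsf{N}(\mu_i,\tau_i^2) + (1-\phi_i)\,\delta_0\}$, where $\mu_i = Y_i$,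 $\tau_i^2 = \sigma^2(\alpha+\gamma)^{-1}$, and $\operatorname{logit}(\phi_i) = \operatorname{logit}(\lambda_n) + \tfrac12\log\tfrac{\gamma}{\alpha+\gamma} + \tfrac{\alpha}{2\sigma^2} Y_i^2$, with $\operatorname{logit}(p)=\log\{p/(1-p)\}$. *)

(* Defs.v *)
From HB Require Import structures.
From mathcomp Require Import all_boot all_order all_algebra.
From mathcomp Require Import all_classical all_reals all_analysis.
Set Implicit Arguments. Unset Strict Implicit. Unset Printing Implicit Defensive.
Import Order.TTheory GRing.Theory Num.Theory.
Import numFieldNormedType.Exports.
Local Open Scope classical_set_scope.
Local Open Scope ring_scope.

Section defs.
Variable R : realType.

Fixpoint iter_int (ms : seq (set R -> \bar R)) (f : seq R -> \bar R) : \bar R :=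
  match ms with
  | [::] => f [::]
  | m :: ms' => (\int[m]_x iter_int ms' (fun xs => f (x :: xs)))%E
  end.

(* Integral of f : R^n -> \bar R (R^n = 'I_n -> R) against the product
   measure  m 0 (x) ... (x) m (n-1), computed as an iterated integral
   (Tonelli). *)
Definition prod_integral (n : nat) (m : 'I_n -> set R -> \bar R)
    (f : ('I_n -> R) -> \bar R) : \bar R :=
  iter_int [seq m i | i <- enum 'I_n] (fun xs => f (fun i => nth 0 xs i)).

Definition prod_measure (n : nat) (m : 'I_n -> set R -> \bar R)
    (A : set ('I_n -> R)) : \bar R :=
  prod_integral m (fun x => (\1_A x)%:E).

Definition logit (p : R) : R := ln (p / (1 - p)).
Definition logistic (t : R) : R := expR t / (1 + expR t).

(* Two-component mixture  phi N(mu, tau^2) + (1 - phi) delta_0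
   (normal_prob m s has standard deviation s). *)
Definition spike_slab (phi mu tau : R) : set R -> \bar R :=
  fun A => (phi%:E * normal_prob mu tau A + (1 - phi)%R%:E * \d_(0%R : R) A)%E.

Definition phi_w (sigma alpha gamma lam y : R) : R :=
  logistic (logit lam + 2^-1 * ln (gamma / (alpha + gamma))
            + alpha / (2 * sigma ^+ 2) * y ^+ 2).

Definition tau_w (sigma alpha gamma : R) : R :=
  Num.sqrt (sigma ^+ 2 / (alpha + gamma)).

Definition Delta (n : nat) (sigma alpha gamma lam : R) (Y : 'I_n -> R) :
    set ('I_n -> R) -> \bar R :=
  prod_measure (fun i => spike_slab (phi_w sigma alpha gamma lam (Y i)) (Y i)
                                    (tau_w sigma alpha gamma)).

Definition supp_size (n : nat) (theta : 'I_n -> R) : nat :=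
  #|[set i : 'I_n | theta i != 0]|.

Definition risk (PZ : set R -> \bar R) (n : nat) (sigma alpha gamma lam Mn : R)
    (theta0 : 'I_n -> R) : \bar R :=
  prod_integral (fun _ => PZ) (fun z =>
    Delta sigma alpha gamma lam (fun i => theta0 i + z i)
      [set theta | Mn * (supp_size theta0)%:R < (supp_size theta)%:R]).

End defs.

(* Main.v *)
Require Import Defs.
From HB Require Import structures.
From mathcomp Require Import all_boot all_order all_algebra.
From mathcomp Require Import all_classical all_reals all_analysis.
From Stdlib Require List.
From mathcomp Require Import measurable_realfun ring lra.
Import Order.TTheory GRing.Theory Num.Theory.
Import numFieldNormedType.Exports.
Local Open Scope classical_set_scope.
Local Open Scope ring_scope.

Section helpers.
Variable R : realType.
Local Open Scope ereal_scope.
Definition mf (m : {measure set R -> \bar R}) : set R -> \bar R := m.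

Lemma In_map (A B : Type) (g : A -> B) (s : seq A) y :
  List.In y (map g s) -> exists x, List.In x s /\ g x = y.
Proof.
elim: s => [//|a s IH] /= [<-|/IH [x [Hx <-]]]; first by exists a; split => //; left.
by exists x; split => //; right.
Qed.
Arguments In_map {A B g s y}.

Lemma le_int0 (mu : {measure set R -> \bar R}) (f g : R -> \bar R) :
  (forall x, 0 <= f x) -> (forall x, f x <= g x) ->
  \int[mu]_x f x <= \int[mu]_x g x.
Proof.
move=> f0 fg; have g0 x : 0 <= g x by exact: le_trans (f0 x) (fg x).
rewrite !ge0_integralTE//; apply: ereal_sup_le => _ [h hf <-].
by exists h => //= x; exact: le_trans (hf x) (fg x).
Qed.

Lemma iter_int_ge0 (mus : seq {measure set R -> \bar R}) f :
  (forall xs, 0 <= f xs) ->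
  0 <= iter_int (map mf mus) f.
Proof.
elim: mus f => [|m mus IH] f f0 /=; first exact: f0.
by apply: integral_ge0 => x _; apply: IH.
Qed.

Lemma iter_int_le_cst (mus : seq {measure set R -> \bar R}) f (c : R) :
  (forall m, List.In m mus -> m setT = 1) ->
  (forall xs, 0 <= f xs) -> (forall xs, f xs <= c%:E) ->
  iter_int (map mf mus) f <= c%:E.
Proof.
elim: mus f => [|m mus IH] f hP f0 fc /=; first exact: fc.
apply: (le_trans (le_int0 _ _ (cst c%:E) _ _)).
- by move=> x; apply: iter_int_ge0.
- by move=> x; apply: IH => // m' Hm'; apply: hP; right.
by rewrite integral_cst// hP ?mule1//; left.
Qed.

Lemma measurable_neq0 : measurable [set x : R | x != 0%R].
Proof.
rewrite (_ : [set x | x != 0%R] = ~` [set 0%R]); first exact: measurableC.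
by apply/seteqP; split => x /=; move/eqP.
Qed.

Lemma iter_int_slab (L : seq ({measure set R -> \bar R} * R * bool))
    (d : {measure set R -> \bar R} * R * bool) f (B : R) :
  (forall k, List.In k L -> k.1.1 setT = 1) ->
  (forall k, List.In k L -> k.2 -> k.1.1 [set x | x != 0%R] <= k.1.2%:E) ->
  (forall xs, 0 <= f xs) -> (forall xs, f xs <= 1) ->
  (forall xs, (forall j, (j < size L)%N -> (nth d L j).2 -> nth 0%R xs j = 0%R) ->
     f xs <= B%:E) ->
  iter_int [seq mf k.1.1 | k <- L] f
    <= (B + \sum_(k <- L | k.2) k.1.2)%:E.
Proof.
elim: L f => [|[[m p] b] L IH] f hP hF f0 f1 hB /=.
  by rewrite big_nil addr0; apply: hB.
have mP : m setT = 1 by apply: (hP (m, p, b)); left.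
have hP' : forall k, List.In k L -> k.1.1 setT = 1 by move=> k Hk; apply: hP; right.
have hF' : forall k, List.In k L -> k.2 -> k.1.1 [set x | x != 0%R] <= k.1.2%:E.
  by move=> k Hk; apply: hF; right.
have eL : [seq mf k.1.1 | k <- L] = map mf [seq k.1.1 | k <- L].
  by rewrite -map_comp.
set S' := (\sum_(k <- L | k.2) k.1.2)%R.
have F0 x : 0 <= iter_int [seq mf k.1.1 | k <- L] (fun xs => f (x :: xs)).
  by rewrite eL; apply: iter_int_ge0.
have FB x : (b -> x = 0%R) ->
  iter_int [seq mf k.1.1 | k <- L] (fun xs => f (x :: xs)) <= (B + S')%:E.
  move=> bx; apply: IH => // xs hxs; apply: hB => -[_ /= /bx //|j] /= jL bj.
  exact: hxs.
rewrite big_cons /=; case: b hP hB hF FB mP => hP hB hF FB mP; last first.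
  apply: (le_trans (le_int0 _ _ (cst (B + S')%:E) _ _)) => //.
  - by move=> x; apply: FB.
  by rewrite integral_cst// mP mule1.
have F1 x : iter_int [seq mf k.1.1 | k <- L] (fun xs => f (x :: xs)) <= (1%R)%:E.
  rewrite eL. apply: iter_int_le_cst.
  - by move=> m' Hm; have [k [Hk Ek]] := In_map Hm; rewrite -Ek; apply: hP'.
  - by move=> xs; apply: f0.
  - by move=> xs; apply: f1.
have BS0 : (0 <= B + S')%R.
  by rewrite -lee_fin; apply: le_trans (F0 0%R) (FB 0%R _).
have ind0 : forall x : R, ((0%R)%:E <= (\1_[set x : R | x != 0%R] x : R)%:E).
  by move=> x; rewrite lee_fin indicE.
apply: (le_trans (le_int0 _ _
  (fun x => (B + S')%:E + (\1_[set x : R | x != 0%R] x : R)%:E) _ _)) => //.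
- move=> x; have [->|x0] := eqVneq x 0%R.
    by apply: le_trans (FB 0%R _) _ => //; apply: leeDl; apply: ind0.
  apply: le_trans (F1 x) _.
  rewrite indicE (mem_set (x0 : [set x : R | x != 0%R] x)) -EFinD lee_fin.
  by rewrite lerDr.
rewrite ge0_integralD//; last first.
  by apply/measurable_EFinP; apply: measurable_indic; exact: measurable_neq0.
rewrite integral_cst// integral_indic//; last exact: measurable_neq0.
rewrite setIT mP mule1 -/S' (addrC p S') addrA (EFinD (B + S') p) leeD2l //.
have H := hF (m, p, true) (or_introl erefl) erefl.
exact: H.
Qed.

Lemma sum_In_ge0 (L : seq ((R -> R) * R)) :
  (forall k, List.In k L -> (0 <= k.2)%R) -> (0 <= \sum_(k <- L) k.2)%R.
Proof.
elim: L => [|k L IH] H; first by rewrite big_nil.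
rewrite big_cons addr_ge0//; first by apply: H; left.
by apply: IH => k' Hk'; apply: H; right.
Qed.

Lemma iter_int_sum (mu : {measure set R -> \bar R}) (L : seq ((R -> R) * R))
    f (b : R) :
  mu setT = 1 -> (0 <= b)%R ->
  (forall k, List.In k L -> (forall x, 0 <= k.1 x)%R /\
     measurable_fun setT k.1 /\ \int[mu]_x (k.1 x)%:E <= k.2%:E) ->
  (forall xs, 0 <= f xs) ->
  (forall xs, f xs <= (b + \sum_(j < size L)
                     (nth (fun _ => 0%R, 0%R) L j).1 (nth 0%R xs j))%:E) ->
  iter_int [seq mf mu | _ <- L] f <= (b + \sum_(k <- L) k.2)%:E.
Proof.
move=> mP; elim: L f b => [|[h c] L IH] f b b0 hL f0 fL /=.
  by have := fL [::]; rewrite big_ord0 big_nil.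
have [h0 [mh ihc]] := hL (h, c) (or_introl erefl).
have hL' : forall k, List.In k L -> (forall x, 0 <= k.1 x)%R /\
     measurable_fun setT k.1 /\ \int[mu]_x (k.1 x)%:E <= k.2%:E.
  by move=> k Hk; apply: hL; right.
have S0 : (0 <= \sum_(k <- L) k.2)%R.
  apply: sum_In_ge0 => k /hL' [k0 [_ Hk]].
  by rewrite -lee_fin; apply: le_trans Hk; apply: integral_ge0 => x _; rewrite lee_fin.
set S' := (\sum_(k <- L) k.2)%R.
have FB x : iter_int [seq mf mu | _ <- L] (fun xs => f (x :: xs)) <=
    ((b + h x) + S')%:E.
  apply: IH => //.
  - by rewrite addr_ge0.
  - move=> xs; apply: le_trans (fL (x :: xs)) _.
    by rewrite big_ord_recl addrA lee_fin.
have eL : [seq mf mu | _ <- L] = map mf [seq mu | _ <- L] by rewrite -map_comp.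
apply: (le_trans (le_int0 _ _ (fun x => (b + S')%:E + (h x)%:E) _ _)).
- by move=> x; rewrite eL; apply: iter_int_ge0.
- by move=> x; rewrite -EFinD addrAC; apply: FB.
rewrite ge0_integralD//; last first.
  - by apply/measurable_EFinP.
  - by move=> x _; rewrite lee_fin.
  - by move=> x _; rewrite lee_fin addr_ge0.
rewrite integral_cst// mP mule1 big_cons -/S'.
have -> : (b + ((h, c).2 + S'))%R = ((b + S') + c)%R by rewrite /= (addrC c S') addrA.
by rewrite (EFinD (b + S') c) leeD2l.
Qed.

Section npm.
Variables mu tau : R.
Definition npm : set R -> \bar R := normal_prob mu tau.
Let npm0 : npm set0 = 0.
Proof. exact: (@measure0 _ (measurableTypeR R) R (normal_prob mu tau)). Qed.
Let npm_ge0 A : 0 <= npm A.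
Proof. exact: (@measure_ge0 _ (measurableTypeR R) R (normal_prob mu tau)). Qed.
Let npm_sa : semi_sigma_additive npm.
Proof. exact: (@measure_semi_sigma_additive _ (measurableTypeR R) R (normal_prob mu tau)). Qed.
HB.instance Definition _ := isMeasure.Build _ R R npm npm0 npm_ge0 npm_sa.
Lemma npm_setT : npm setT = 1.
Proof. exact: (@probability_setT _ (measurableTypeR R) R (normal_prob mu tau)). Qed.
End npm.

Definition ssm (phi mu tau : R) (h0 : (0 <= phi)%R) (h1 : (0 <= 1 - phi)%R)
  : {measure set R -> \bar R} :=
  @measure_add _ R R (@mscale _ R R (NngNum h0) (npm mu tau))
              (@mscale _ R R (NngNum h1) (@dirac _ R 0%R R)).

Lemma ssmE phi mu tau h0 h1 A : @ssm phi mu tau h0 h1 A = spike_slab phi mu tau A.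
Proof. exact: measure_addE. Qed.

Lemma ssm_setT phi mu tau h0 h1 : @ssm phi mu tau h0 h1 setT = 1.
Proof.
rewrite ssmE /spike_slab probability_setT diracT !mule1 -EFinD.
by rewrite addrC subrK.
Qed.

Lemma ssm_neq0 phi mu tau h0 h1 :
  @ssm phi mu tau h0 h1 [set x | x != 0%R] <= phi%:E.
Proof.
rewrite ssmE /spike_slab diracE memNset /=; last by rewrite eqxx.
rewrite mule0 adde0 -[leRHS]mule1; apply: lee_wpmul2l; first by rewrite lee_fin.
change (npm mu tau [set x | x != 0%R] <= 1); rewrite -(npm_setT mu tau).
apply: le_measure; rewrite ?inE //; exact: measurable_neq0.
Qed.

Lemma logistic_ge0 (t : R) : (0 <= logistic t)%R.
Proof. by rewrite /logistic divr_ge0// ?addr_ge0// ?expR_ge0. Qed.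

Lemma logistic_le1 (t : R) : (logistic t <= 1)%R.
Proof.
rewrite /logistic ler_pdivrMr ?mul1r; last by rewrite ltr_wpDr// expR_gt0.
by rewrite lerDr.
Qed.

Lemma logistic_leexp (t : R) : (logistic t <= expR t)%R.
Proof.
rewrite /logistic ler_pdivrMr; last by rewrite ltr_wpDr// expR_gt0.
by rewrite ler_peMr// ?expR_ge0// lerDl expR_ge0.
Qed.

Lemma Delta_bound n (sigma alpha gamma lam Mn : R) (theta0 Y : 'I_n -> R) :
  (1 <= Mn)%R ->
  Delta sigma alpha gamma lam Y
    [set theta | (Mn * (supp_size theta0)%:R < (supp_size theta)%:R)%R]
  <= (\sum_(i < n | theta0 i == 0%R) phi_w sigma alpha gamma lam (Y i))%:E.
Proof.
move=> M1.
set phiY := fun i => phi_w sigma alpha gamma lam (Y i).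
have h0 i : (0 <= phiY i)%R by apply: logistic_ge0.
have h1 i : (0 <= 1 - phiY i)%R by rewrite subr_ge0; apply: logistic_le1.
set tau := tau_w sigma alpha gamma.
pose g := fun i : 'I_n => (@ssm (phiY i) (Y i) tau (h0 i) (h1 i), phiY i, theta0 i == 0%R).
pose L := map g (enum 'I_n).
have eL : [seq spike_slab (phi_w sigma alpha gamma lam (Y i)) (Y i)
            (tau_w sigma alpha gamma) | i <- enum 'I_n] = [seq mf k.1.1 | k <- L].
  by rewrite /L -[in RHS]map_comp; apply: eq_map => i; apply/funext => B; rewrite /= ssmE.
rewrite /Delta /prod_measure /prod_integral eL.
set A := [set theta | _].
have := @iter_int_slab L ((mzero : measure R R), 0%R, false)
  (fun xs => (\1_A (fun i => nth 0%R xs i))%:E) 0%R.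
have sL : size L = n by rewrite size_map size_enum_ord.
have nL (i : 'I_n) : nth ((mzero : measure R R), 0%R, false) L i = g i.
  by rewrite (nth_map i) ?size_enum_ord// nth_ord_enum.
move=> H; apply: le_trans (H _ _ _ _ _) _.
- move=> k Hk; have [i [_ <-]] := In_map Hk; exact: ssm_setT.
- move=> k Hk; have [i [_ <-]] := In_map Hk => _; exact: ssm_neq0.
- by move=> xs; rewrite lee_fin indicE.
- by move=> xs; rewrite lee_fin indicE; case: (_ \in _) => /=.
- move=> xs hxs; rewrite indicE memNset //= /A /=; apply/negP; rewrite -leNgt.
  apply: le_trans (ler_peMl _ M1); last by [].
  rewrite ler_nat /supp_size.
  apply: subset_leq_card; apply/fintype.subsetP => i.
    rewrite !in_setE /=; apply: contraNN => /eqP t0; apply/eqP; apply: hxs.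
    + by rewrite sL.
    + by rewrite nL /= t0 eqxx.
rewrite add0r big_map lee_fin big_enum_cond /=.
by [].
Qed.

Lemma Delta_ge0 n (sigma alpha gamma lam : R) (Y : 'I_n -> R) A :
  0 <= Delta sigma alpha gamma lam Y A.
Proof.
set phiY := fun i => phi_w sigma alpha gamma lam (Y i).
have h0 i : (0 <= phiY i)%R by apply: logistic_ge0.
have h1 i : (0 <= 1 - phiY i)%R by rewrite subr_ge0; apply: logistic_le1.
set tau := tau_w sigma alpha gamma.
have eL : [seq spike_slab (phi_w sigma alpha gamma lam (Y i)) (Y i)
            (tau_w sigma alpha gamma) | i <- enum 'I_n] =
          map mf [seq @ssm (phiY i) (Y i) tau (h0 i) (h1 i) | i <- enum 'I_n].
  by rewrite -[in RHS]map_comp; apply: eq_map => i; apply/funext => B; rewrite /= ssmE.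
rewrite /Delta /prod_measure /prod_integral eL; apply: iter_int_ge0 => xs.
by rewrite lee_fin indicE.
Qed.

Lemma risk_bound (PZ : probability R R) n (sigma alpha gamma lam Mn : R)
    (theta0 : 'I_n -> R) (hh : R -> R) (c : R) :
  (1 <= Mn)%R -> (forall z, 0 <= hh z)%R -> measurable_fun setT hh ->
  \int[PZ]_z (hh z)%:E <= c%:E ->
  (forall z, phi_w sigma alpha gamma lam z <= hh z)%R ->
  risk PZ sigma alpha gamma lam Mn theta0 <= (n%:R * c)%:E.
Proof.
move=> M1 hh0 mhh ihh phih.
have c0 : (0 <= c)%R.
  by rewrite -lee_fin; apply: le_trans ihh; apply: integral_ge0 => z _; rewrite lee_fin.
pose g := fun i : 'I_n => (if theta0 i == 0%R then hh else (fun _ => 0%R),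
                          if theta0 i == 0%R then c else 0%R).
pose L := map g (enum 'I_n).
have sL : size L = n by rewrite size_map size_enum_ord.
have nL (i : 'I_n) : nth (fun _ => 0%R, 0%R) L i = g i.
  by rewrite (nth_map i) ?size_enum_ord// nth_ord_enum.
have eP : [seq (fun _ : 'I_n => (PZ : set R -> \bar R)) i | i <- enum 'I_n] =
          [seq mf PZ | _ <- L].
  by rewrite -[in RHS]map_comp.
rewrite /risk /prod_integral eP.
apply: le_trans (@iter_int_sum PZ L _ 0%R _ _ _ _ _) _.
- exact: probability_setT.
- by [].
- move=> k Hk; have [i [_ <-]] := In_map Hk; rewrite /g.
  case: ifP => _ /=; first by split => //.
  split => // ; split; first exact: measurable_cst.
  by rewrite integral0_eq.
- by move=> xs; apply: Delta_ge0.
- move=> xs; apply: le_trans (@Delta_bound n sigma alpha gamma lam Mn theta0 _ M1) _.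
  rewrite add0r sL lee_fin big_mkcond /=.
  apply: ler_sum => i _; rewrite nL /g; case: ifP => // /eqP ->.
  by rewrite add0r.
rewrite add0r big_map lee_fin.
apply: le_trans (_ : \sum_(i <- enum 'I_n) c <= _)%R.
  by apply: ler_sum => i _; rewrite /g; case: ifP.
by rewrite big_enum sumr_const card_ord mulr_natl.
Qed.

Lemma powN_cvg0 (p : R) : (0 < p)%R -> ((n%:R : R) `^ (- p))%R @[n --> \oo] --> 0%R.
Proof.
move=> p0; apply/cvgr0Pnorm_lt => e e0.
have e10 : (0 < e^-1)%R by rewrite invr_gt0.
near=> n.
have rn : ((e^-1) `^ (p^-1) < n%:R)%R by near: n; apply: nbhs_infty_gtr.
have n0 : (0 < n%:R :> R)%R by apply: le_lt_trans rn; apply: powR_ge0.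
rewrite ger0_norm ?powR_ge0// powRN -[e]invrK ltf_pV2 ?posrE ?powR_gt0 ?invr_gt0//.
have <- : (((e^-1) `^ (p^-1)) `^ p = e^-1)%R.
  by rewrite -powRrM mulVf ?gt_eqF// powRr1// ltW.
by apply: gt0_ltr_powR => //; rewrite nnegrE ?powR_ge0// ltW.
Unshelve. all: end_near.
Qed.

Lemma risk_ge0 (PZ : probability R R) n (sigma alpha gamma lam Mn : R)
    (theta0 : 'I_n -> R) : 0 <= risk PZ sigma alpha gamma lam Mn theta0.
Proof.
rewrite /risk /prod_integral.
have eP : [seq (fun _ : 'I_n => (PZ : set R -> \bar R)) i | i <- enum 'I_n] =
          map mf [seq (PZ : measure R R) | _ <- enum 'I_n].
  by rewrite -[in RHS]map_comp.
by rewrite eP; apply: iter_int_ge0 => xs; apply: Delta_ge0.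
Qed.

End helpers.


Theorem theorem3 (R : realType) (PZ : probability R R) (sigma T alpha gamma a : R)
  (lambda M : nat -> R) :
  (* noise: mean zero, sigma-subgaussian, mgf of (Z/sigma)^2 finite on (0,T] *)
  0 < sigma ->
  PZ.-integrable setT (fun z => z%:E) ->
  (\int[PZ]_z z%:E = 0)%E ->
  (forall t : R, (\int[PZ]_z (expR (t * z))%:E <= (expR (sigma ^+ 2 * t ^+ 2 / 2))%:E)%E) ->
  0 < T ->
  (forall t : R, 0 < t <= T ->
     (\int[PZ]_z (expR (t * (z / sigma) ^+ 2))%:E < +oo)%E) ->
  (* parameters of Delta^n *)
  0 < alpha < 1 -> 0 < gamma ->
  (forall n, 0 < lambda n < 1) ->
  (* lambda_n = O(n^-(a+1)) *)
  0 < a ->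
  (exists C : R, exists N : nat, forall n : nat, (N <= n)%N ->
     lambda n <= C * n%:R `^ (- (a + 1))) ->
  alpha < 2 * T ->
  (* M_n > 1, M_n -> oo *)
  (forall n, 1 < M n) ->
  M @ \oo --> +oo ->
  (fun n => ereal_sup [set risk PZ sigma alpha gamma (lambda n) (M n) theta0
                       | theta0 in [set: 'I_n -> R]]) @ \oo --> 0%E.
Proof.
move=> s0 _ _ _ T0 hT /andP[a0 a1] g0 hl apos [C [N hC]] aT M1 _.
set Kint := (\int[PZ]_z (expR (alpha / 2 * (z / sigma) ^+ 2))%:E)%E.
have hK : (Kint < +oo)%E by apply: hT; apply/andP; split; lra.
have Kint0 : (0 <= Kint)%E by apply: integral_ge0 => z _; rewrite lee_fin expR_ge0.
set K := fine Kint.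
have KE : Kint = K%:E by rewrite fineK // ge0_fin_numE.
have Kge0 : 0 <= K by rewrite -lee_fin -KE.
set K0 := fun n => expR (logit (lambda n) + 2^-1 * ln (gamma / (alpha + gamma))).
have hrisk : forall n (theta0 : 'I_n -> R),
    (risk PZ sigma alpha gamma (lambda n) (M n) theta0 <= (n%:R * (K0 n * K))%:E)%E.
  move=> n theta0.
  apply: (@risk_bound R PZ n sigma alpha gamma (lambda n) (M n) theta0
    (fun z => K0 n * expR (alpha / 2 * (z / sigma) ^+ 2))).
  - exact: ltW.
  - by move=> z; rewrite mulr_ge0 ?expR_ge0.
  - apply: measurable_funM => //; apply: measurableT_comp => //.
    apply: measurable_funM => //; apply: measurable_funX.
    exact: measurable_funM.
  - under eq_integral do rewrite EFinM.
    rewrite ge0_integralZl_EFin //.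
    + by rewrite -/Kint KE -EFinM.
    + apply/measurable_EFinP; apply: measurableT_comp => //.
      apply: measurable_funM => //; apply: measurable_funX.
      exact: measurable_funM.
    + exact: expR_ge0.
  - move=> z; rewrite /phi_w; apply: le_trans; first exact: logistic_leexp.
    rewrite expRD; rewrite (_ : alpha / (2 * sigma ^+ 2) * z ^+ 2 =
       alpha / 2 * (z / sigma) ^+ 2) //.
    by field; rewrite gt_eqF.
have K0le : forall n, lambda n <= 2^-1 -> K0 n <= 2 * lambda n.
  move=> n ln2; have /andP[l0 l1] := hl n.
  rewrite /K0 expRD /logit lnK; last by rewrite posrE divr_gt0// subr_gt0.
  have e1 : expR (2^-1 * ln (gamma / (alpha + gamma))) <= 1.
    rewrite expR_le1 mulr_ge0_le0 ?invr_ge0// ln_le0//.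
    by rewrite ler_pdivrMr ?mul1r ?lerDr ?ltW// addr_gt0.
  apply: le_trans (_ : lambda n / (1 - lambda n) <= _).
    have q0 : 0 <= lambda n / (1 - lambda n) by rewrite divr_ge0 ?subr_ge0 ?ltW.
    by rewrite ler_piMr.
  rewrite ler_pdivrMr ?subr_gt0//; nra.
have lam_small : \forall n \near \oo, lambda n <= 2^-1.
  have pa1 : 0 < a + 1 by lra.
  have Hc : (fun n : nat => C * n%:R `^ (-(a+1))) @ \oo --> 0.
    by rewrite -(mulr0 C); apply: cvgM; [exact: cvg_cst | exact: powN_cvg0].
  have H := (@cvgr0Pnorm_lt _ _ _ _ _ _).1 Hc (2^-1) ltac:(lra).
  near=> n; apply: le_trans (hC n _) _; first by near: n; apply: nbhs_infty_ge.
  apply: le_trans (ler_norm _) (ltW _); near: n; exact: H.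
have u_cvg : (fun n => n%:R * (K0 n * K)) @ \oo --> 0.
  have v0 : (fun n : nat => 2 * K * C * n%:R `^ (- a)) @ \oo --> 0.
    by rewrite -(mulr0 (2 * K * C)); apply: cvgM; [exact: cvg_cst | exact: powN_cvg0].
  apply: (@squeeze_cvgr _ _ _ _ (fun _ => 0) (fun n => 2 * K * C * n%:R `^ (- a))) => //; last exact: cvg_cst.
  near=> n; apply/andP; split; first by rewrite mulr_ge0 ?mulr_ge0 ?expR_ge0.
  have ln2 : lambda n <= 2^-1 by near: n.
  have nN : (N <= n)%N by near: n; apply: nbhs_infty_ge.
  have n1 : (1 <= n)%N by near: n; apply: nbhs_infty_ge.
  have n0 : (n%:R : R) != 0 by rewrite pnatr_eq0 -lt0n.
  apply: le_trans (_ : n%:R * (2 * lambda n * K) <= _).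
    by apply: ler_wpM2l => //; apply: ler_wpM2r => //; exact: K0le.
  apply: le_trans (_ : n%:R * (2 * (C * n%:R `^ (- (a + 1))) * K) <= _).
    apply: ler_wpM2l => //; apply: ler_wpM2r => //; apply: ler_wpM2l => //.
    exact: hC.
  rewrite opprD powRD; last by rewrite n0 implybT.
  rewrite powR_inv1 ?ler0n//.
  by rewrite le_eqVlt; apply/orP; left; apply/eqP; field.
apply: (@squeeze_cvge _ _ _ _ (fun _ => 0%E) _ (fun n => (n%:R * (K0 n * K))%:E)).
- near=> n; apply/andP; split.
  + apply: le_trans (@risk_ge0 R PZ n sigma alpha gamma (lambda n) (M n) (fun _ => 0)) _.
    by apply: ereal_sup_ubound; exists (fun _ => 0).
  + by apply: ge_ereal_sup => _ [theta0 _ <-]; exact: hrisk.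
- exact: cvg_cst.
- apply: cvg_EFin; first by near=> n.
  exact: u_cvg.
Unshelve. all: end_near.
Qed.
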